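(* Let $\Phi(\xi;t_5,t_2,x)=\big[\mathbb I+\sum_{k\ge1}\Phi_k\xi^{-k}\big]e^{\Theta(\xi;t_5,t_2,x)}$ be a formal solution at $\xi=\infty$ of $\partial_\xi\Phi=\mathcal L(\xi;t_5,t_2,x)\Phi$. Then $\Phi(\xi;t_5,t_2,x)=\mathcal S^T\Phi(\omega\xi;t_5,t_2,x)\mathcal S$, and the coefficients satisfy $\Phi_k=\omega^{-k}\mathcal S^T\Phi_k\mathcal S$ for all $k$.
   Context: $\omega=e^{2\pi i/3}$, $\mathcal S=\begin{pmatrix}0&1&0\\0&0&1\\1&0&0\end{pmatrix}$. $\Theta=\mathrm{diag}(\vartheta_1,\vartheta_2,\vartheta_3)$ with $\vartheta_j(\xi)=\frac37\omega^{j-1}\xi^7+\omega^{1-j}t_5\xi^5+\omega^{1-j}t_2\xi^2+\omega^{j-1}x\xi$. $\mathcal L(\xi):=3\xi^2g(\xi)^{-1}L(\xi^3)g(\xi)-g(\xi)^{-1}g'(\xi)$ with $g(\xi)=\frac i{\sqrt3}\mathrm{diag}(\xi,1,\xi^{-1})\begin{pmatrix}1&\omega&\omega^2\\1&1&1\\1&\omega^2&\omega\end{pmatrix}$ and $L(\lambda)=E_{13}\lambda^2+\begin{pmatrix}0&2t_5+\frac14Q_U&-Q_V\\1&0&2t_5+\frac14Q_U\\0&1&0\end{pmatrix}\lambda+L_0$ ($E_{ij}$ matrix units, $Q_a,P_a$ parameters), $L_0$ with rows $(\tfrac18Q_U^2-P_W+\tfrac12P_V-\tfrac14t_5Q_U-\tfrac16t_5^2,L_{12},L_{13})$,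 $(\tfrac12Q_V-\tfrac14Q_W,2P_W-\tfrac14Q_U^2+\tfrac12t_5Q_U+\tfrac13t_5^2,L_{23})$, $(t_5-\tfrac12Q_U,\tfrac12Q_V+\tfrac14Q_W,\tfrac18Q_U^2-P_W-\tfrac12P_V-\tfrac14t_5Q_U-\tfrac16t_5^2)$, $L_{12}=\tfrac5{16}Q_UQ_W-P_U+\tfrac14t_5Q_W-\tfrac38Q_UQ_V-\tfrac12t_5Q_V+t_2$, $L_{13}=\tfrac1{16}Q_W^2+\tfrac7{32}Q_U^3+\tfrac34Q_V^2-\tfrac32P_WQ_U+\tfrac5{16}t_5Q_U^2-2t_5P_W+\tfrac14t_5^2Q_U+x+\tfrac8{27}t_5^3$, $L_{23}=-\tfrac5{16}Q_UQ_W+P_U-\tfrac14t_5Q_W-\tfrac38Q_UQ_V-\tfrac12t_5Q_V+t_2$. *)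

(* Defs.v *)
From HB Require Import structures.
From mathcomp Require Import all_boot all_order all_algebra.
Set Implicit Arguments. Unset Strict Implicit. Unset Printing Implicit Defensive.
Import Order.TTheory GRing.Theory Num.Theory.
Local Open Scope ring_scope.

Section Defs.
Variable C : numClosedFieldType.

(* omega = e^{2 pi i/3} = (-1 + i sqrt 3)/2 *)
Definition omega : C := (-1 + 'i * sqrtC 3) / 2.

Definition mx3 {T : nmodType} (a b c d e f g h k : T) : 'M[T]_3 :=
  \matrix_(i < 3, j < 3)
     nth 0 (nth [::] [:: [:: a; b; c]; [:: d; e; f]; [:: g; h; k]] i) j.

Definition Smx : 'M[C]_3 := mx3 0 1 0  0 0 1  1 0 0.

(* the constant matrix of g(xi) = i/sqrt3 diag(xi,1,xi^-1) V *)
Definition Vmx : 'M[C]_3 :=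
  mx3 1 omega (omega ^+ 2)  1 1 1  1 (omega ^+ 2) omega.

Variables (t5 t2 x QU QV QW PU PV PW : C).

(* L(lambda) = E13 lambda^2 + L1 lambda + L0 *)
Definition E13 : 'M[C]_3 := mx3 0 0 1  0 0 0  0 0 0.
Definition L1 : 'M[C]_3 :=
  mx3 0 (2 * t5 + 4^-1 * QU) (- QV)
      1 0 (2 * t5 + 4^-1 * QU)
      0 1 0.
Definition L12 : C :=
  5/16 * QU * QW - PU + 4^-1 * t5 * QW - 3/8 * QU * QV - 2^-1 * t5 * QV + t2.
Definition L13 : C :=
  1/16 * QW ^+ 2 + 7/32 * QU ^+ 3 + 3/4 * QV ^+ 2 - 3/2 * PW * QU
  + 5/16 * t5 * QU ^+ 2 - 2 * t5 * PW + 4^-1 * t5 ^+ 2 * QU + x + 8/27 * t5 ^+ 3.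
Definition L23 : C :=
  - (5/16) * QU * QW + PU - 4^-1 * t5 * QW - 3/8 * QU * QV - 2^-1 * t5 * QV + t2.
Definition L0 : 'M[C]_3 :=
  mx3 (8^-1 * QU ^+ 2 - PW + 2^-1 * PV - 4^-1 * t5 * QU - 6^-1 * t5 ^+ 2) L12 L13
      (2^-1 * QV - 4^-1 * QW) (2 * PW - 4^-1 * QU ^+ 2 + 2^-1 * t5 * QU + 3^-1 * t5 ^+ 2) L23
      (t5 - 2^-1 * QU) (2^-1 * QV + 4^-1 * QW)
        (8^-1 * QU ^+ 2 - PW - 2^-1 * PV - 4^-1 * t5 * QU - 6^-1 * t5 ^+ 2).

Definition cmx (A : 'M[C]_3) : 'M[{poly C}]_3 := map_mx polyC A.

Definition Lxi3 : 'M[{poly C}]_3 :=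
  'X^6 *: cmx E13 + 'X^3 *: cmx L1 + cmx L0.

(* xi * diag(xi^-1,1,xi) = diag(1,xi,xi^2),  xi * diag(xi,1,xi^-1) = diag(xi^2,xi,1) *)
Definition Bmx : 'M[{poly C}]_3 := diag_mx (\row_(i < 3) 'X^i).
Definition Cmx : 'M[{poly C}]_3 := diag_mx (\row_(i < 3) 'X^(2 - i)).
Definition Emx : 'M[C]_3 := diag_mx (\row_(i < 3) (1 - i%:R)).

(* curly L(xi) = Lpol(xi) + xi^{-1} Lres, where
   3 xi^2 g^-1 L(xi^3) g = 3 V^-1 Bmx L(xi^3) Cmx V   and
   g^-1 g' = xi^-1 V^-1 diag(1,0,-1) V.                                 *)
Definition Lpol : 'M[{poly C}]_3 :=
  3%:R *: (cmx (invmx Vmx) *m Bmx *m Lxi3 *m Cmx *m cmx Vmx).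
Definition Lres : 'M[C]_3 := - (invmx Vmx *m Emx *m Vmx).

(* vartheta_j, j = i+1 *)
Definition theta (i : 'I_3) : {poly C} :=
  (3/7 * omega ^+ i) *: 'X^7 + (omega ^- i * t5) *: 'X^5
  + (omega ^- i * t2) *: 'X^2 + (omega ^+ i * x) *: 'X.
Definition Theta : 'M[{poly C}]_3 := diag_mx (\row_i theta i).
Definition dTheta : 'M[{poly C}]_3 := map_mx (fun p => p^`()) Theta.

Definition mx_eval (A : 'M[{poly C}]_3) (xi : C) : 'M[C]_3 := map_mx (fun p => p.[xi]) A.

Definition mcoef (A : 'M[{poly C}]_3) (m : nat) : 'M[C]_3 := map_mx (fun p : {poly C} => nth 0 (polyseq p) m) A.
Definition msize (A : 'M[{poly C}]_3) : nat := (\max_(i : 'I_3) \max_(j : 'I_3) size (A i j))%N.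

(* coefficient of xi^{-k} of Y = sum_k Phi_k xi^{-k}, k integer (0 for k<0) *)
Definition coefZ (Phi : nat -> 'M[C]_3) (k : int) : 'M[C]_3 :=
  match k with Posz n => Phi n | Negz _ => 0 end.

(* Phi = [I + sum_{k>=1} Phi_k xi^{-k}] e^{Theta} is a formal solution of
   dPhi/dxi = curly-L Phi, i.e. Y = I + sum Phi_k xi^{-k} satisfies
   Y' + Y Theta' = curly-L Y as formal Laurent series in xi^{-1}:
   comparing coefficients of xi^p for every integer p.                  *)
Definition formal_solution (Phi : nat -> 'M[C]_3) : Prop :=
  Phi 0%N = 1%:M /\
  forall p : int,
    (p + 1)%:~R *: coefZ Phi (- p - 1)
    + \sum_(m < msize dTheta) (coefZ Phi (m%:Z - p) *m mcoef dTheta m)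
    = \sum_(m < msize Lpol) (mcoef Lpol m *m coefZ Phi (m%:Z - p))
      + Lres *m coefZ Phi (- 1 - p).

End Defs.

(* Main.v *)
Require Import Defs.
From HB Require Import structures.
From mathcomp Require Import all_boot all_order all_algebra.
From mathcomp Require Import ring zify.
From Stdlib Require Import FunctionalExtensionality.
Import Order.TTheory GRing.Theory Num.Theory.
Local Open Scope ring_scope.

Ltac mxtac := apply/matrixP; case=> [[|[|[|?]]] ?] //; case=> [[|[|[|?]]] ?] //;
  rewrite ?mxE ?big_ord_recr ?big_ord0 /= ?mxE /= ?big_ord_recr ?big_ord0 /= ?mxE /=.

Arguments omega : simpl never.
Arguments GRing.exp : simpl never.
Section S.
Variable C : numClosedFieldType.
Notation w := (omega C).
Lemma om2 : w ^+ 2 = - w - 1.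
Proof.
rewrite /omega.
have hi : ('i : C) ^+ 2 = -1 by rewrite sqrCi.
have hs : (sqrtC 3 : C) ^+ 2 = 3 by rewrite sqrtCK.
have h2 : (2 : C) != 0 by rewrite pnatr_eq0.
by field: hi hs.
Qed.
Lemma om3 : w ^+ 3 = 1.
Proof. have h := om2. by ring: h. Qed.
Lemma wnz : w != 0.
Proof. apply/eqP=> h; have := om3; rewrite h expr0n /= => /eqP; rewrite eq_sym oner_eq0. by []. Qed.
Lemma wn1 : w != 1.
Proof.
apply/eqP=> h.
have e : (3:C) = w ^+ 2 + w + 1 by rewrite h; ring.
have h2 := om2.
have : (3:C) == 0 by rewrite e; apply/eqP; ring: h2.
by rewrite pnatr_eq0.
Qed.
Lemma winv1 : w ^- 1 = w ^+ 2.
Proof. apply: (mulfI wnz); rewrite expr1 mulfV ?wnz //. have h := om3. by ring: h. Qed.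
Lemma winv2 : w ^- 2 = w.
Proof. apply: (mulfI (expf_neq0 2 wnz)); rewrite mulfV ?expf_neq0 ?wnz //. have h := om3. by ring: h. Qed.
Lemma winv0 : w ^- 0 = 1.
Proof. by rewrite expr0 invr1. Qed.

Variables (t5 t2 x : C).

Lemma part1 (xi : C) :
      (Smx C)^T *m mx_eval (Theta t5 t2 x) (w * xi) *m Smx C
      = mx_eval (Theta t5 t2 x) xi.
Proof.
rewrite /Smx /mx_eval /Theta /mx3 /theta.
have h3 := om3; have i1 := winv1; have i2 := winv2.
move: h3 i1 i2; generalize (omega C) => w' h3 i1 i2.
mxtac.
all: rewrite ?mulr0n ?mulr1n ?mul0r ?mulr0 ?addr0 ?add0r ?mul1r ?mulr1 ?horner0 //.
all: rewrite !(hornerD, hornerZ, hornerXn, hornerX) ?expr0 ?invr1 ?i1 ?i2.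
all: ring: h3.
Qed.
Definition sigm (A : 'M[C]_3) := (Smx C)^T *m A *m Smx C.
Lemma SST : Smx C *m (Smx C)^T = 1%:M.
Proof. rewrite /Smx /mx3; mxtac; by rewrite ?mulr0 ?mulr1 ?addr0 ?add0r. Qed.
Lemma STS : (Smx C)^T *m Smx C = 1%:M.
Proof. rewrite /Smx /mx3; mxtac; by rewrite ?mulr0 ?mulr1 ?addr0 ?add0r. Qed.
Lemma sigM A B : sigm (A *m B) = sigm A *m sigm B.
Proof. by rewrite /sigm !mulmxA -[_ *m Smx C *m _]mulmxA SST mulmx1. Qed.

Definition Dl : 'M[C]_3 := diag_mx (\row_(j < 3) w ^+ (2 + j)).
Definition Dr : 'M[C]_3 := diag_mx (\row_(i < 3) w ^+ (4 - i)).
Lemma VS : Vmx C *m Smx C = Dl *m Vmx C.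
Proof.
have h := om2.
rewrite /Vmx /Smx /Dl /mx3.
move: h; generalize (omega C) => w' h.
mxtac.
all: ring: h.
Qed.
Definition Wmx : 'M[C]_3 := 3^-1 *: mx3 1 1 1 (w ^+ 2) 1 w w 1 (w ^+ 2).
Lemma WV : Wmx *m Vmx C = 1%:M.
Proof.
have h := om2.
have h3 : (3 : C) != 0 by rewrite pnatr_eq0.
rewrite /Vmx /Wmx /mx3.
move: h; generalize (omega C) => w' h.
mxtac.
all: field: h.
all: try exact h3; by [].
Qed.
Lemma Vunit : Vmx C \in unitmx.
Proof. by case: (mulmx1_unit WV). Qed.
Lemma DrDl : Dr *m Dl = 1%:M.
Proof.
have h := om3.
rewrite /Dr /Dl; move: h; generalize (omega C) => w' h.
mxtac; rewrite ?mulr0n ?mulr1n ?mulr0 ?mul0r ?addr0 ?add0r //.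
all: rewrite -exprD /=; try ring: h.
Qed.
Lemma STVi : (Smx C)^T *m invmx (Vmx C) = invmx (Vmx C) *m Dr.
Proof.
have e1 : Dr *m Vmx C = Vmx C *m (Smx C)^T.
  by rewrite -[Dr *m Vmx C]mulmx1 -SST !mulmxA -[Dr *m Vmx C *m Smx C]mulmxA VS mulmxA DrDl mul1mx.
have := congr1 (fun A => invmx (Vmx C) *m A *m invmx (Vmx C)) e1 => /=.
rewrite !mulmxA mulVmx ?Vunit // mul1mx -!mulmxA mulmxV ?Vunit // mulmx1.
by move=> ->.
Qed.
Lemma sigVi A : sigm (invmx (Vmx C) *m A *m Vmx C) = invmx (Vmx C) *m (Dr *m A *m Dl) *m Vmx C.
Proof.
by rewrite /sigm !mulmxA STVi -!mulmxA VS.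
Qed.

Variables (QU QV QW PU PV PW : C).
Local Notation Lpol := (Lpol t5 t2 x QU QV QW PU PV PW).
Local Notation Lxi3 := (Lxi3 t5 t2 x QU QV QW PU PV PW).

Lemma mcoef_cmxl (A : 'M[C]_3) (P : 'M[{poly C}]_3) m : mcoef (cmx A *m P) m = A *m mcoef P m.
Proof.
apply/matrixP => i j; rewrite !mxE coef_sum; apply: eq_bigr => k _.
by rewrite !mxE coefCM.
Qed.
Lemma mcoef_cmxr (A : 'M[C]_3) (P : 'M[{poly C}]_3) m : mcoef (P *m cmx A) m = mcoef P m *m A.
Proof.
apply/matrixP => i j; rewrite !mxE coef_sum; apply: eq_bigr => k _.
by rewrite !mxE coefMC.
Qed.
Lemma mcoef_scale3 (P : 'M[{poly C}]_3) m : mcoef (3%:R *: P) m = 3 *: mcoef P m.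
Proof.
by apply/matrixP => i j; rewrite !mxE mulr_natl coefMn mulr_natl.
Qed.

Definition Km m := mcoef (Bmx C *m Lxi3 *m Cmx C) m.
Lemma LpolE m : mcoef Lpol m = 3 *: (invmx (Vmx C) *m Km m *m Vmx C).
Proof.
rewrite /Defs.Lpol mcoef_scale3 -!mulmxA mcoef_cmxl !mulmxA mcoef_cmxr /Km.
by rewrite !mulmxA.
Qed.

Definition P0 (p : {poly C}) := forall k, w ^+ k * p`_k = p`_k.
Lemma P0D p q : P0 p -> P0 q -> P0 (p + q).
Proof. by move=> hp hq k; rewrite coefD mulrDr hp hq. Qed.
Lemma P0XC q c : P0 ('X^(3 * q) * c%:P).
Proof.
move=> k; rewrite coefXnM coefC; case: ltnP => h; first by rewrite mulr0.
case: eqP => e; last by rewrite mulr0.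
have -> : k = (3 * q)%N by move: e h; clear; lia.
by rewrite exprM om3 expr1n mul1r.
Qed.
Lemma P0Lxi3 i j : P0 (Lxi3 i j).
Proof.
rewrite /Defs.Lxi3 /cmx !mxE.
apply: P0D; first apply: P0D.
- exact: (P0XC 2).
- exact: (P0XC 1).
- by rewrite -[_%:P]mul1r -(expr0 'X); exact: (P0XC 0).
Qed.

Lemma KmE m (i j : 'I_3) : Km m i j = ('X^(i + (2 - j)) * Lxi3 i j)`_m.
Proof.
rewrite /Km /Bmx /Cmx mul_diag_mx mul_mx_diag !mxE.
by rewrite mulrC mulrA -exprD addnC.
Qed.

Lemma Km_sym m : w ^+ m.+1 *: (Dr *m Km m *m Dl) = Km m.
Proof.
move: (KmE m); move: (Km m) => Kmm KE.
rewrite /Dr /Dl mul_diag_mx mul_mx_diag.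
apply/matrixP => i j; rewrite !mxE KE coefXnM.
case: ltnP => h; first by rewrite !(mulr0, mul0r).
set k := (m - (i + (2 - j)))%N.
rewrite -[in RHS](P0Lxi3 i j k).
set c := (Lxi3 i j)`_k.
rewrite (_ : _ * _ = w ^+ (m.+1 + (4 - i) + (2 + j)) * c); last by rewrite !exprD; ring.
have -> : (m.+1 + (4 - i) + (2 + j))%N = (k + 3 * 3)%N.
  by rewrite /k; move: (ltn_ord i) (ltn_ord j) h; clear; lia.
by rewrite exprD exprM om3 expr1n mulr1.
Qed.

Lemma sigZ c A : sigm (c *: A) = c *: sigm A.
Proof. by rewrite /sigm -scalemxAr -scalemxAl. Qed.
Lemma sigN A : sigm (- A) = - sigm A.
Proof. by rewrite /sigm mulmxN mulNmx. Qed.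

Lemma Lpol_sym m : w ^+ m.+1 *: sigm (mcoef Lpol m) = mcoef Lpol m.
Proof.
rewrite LpolE sigZ sigVi scalerA mulrC -scalerA; congr (_ *: _).
by rewrite scalemxAl scalemxAr Km_sym.
Qed.

Lemma Lres_sym : sigm (Lres C) = Lres C.
Proof.
rewrite /Lres sigN sigVi; congr (- (_ *m _ *m _)).
rewrite /Dr /Dl /Emx mul_diag_mx mul_mx_diag.
apply/matrixP => i j; rewrite !mxE.
case: (eqVneq i j) => [<-|nij]; last by rewrite !mulr0n mulr0 mul0r.
rewrite !mulr1n mulrC mulrA -exprD.
have -> : (2 + i + (4 - i))%N = (3 * 2)%N by move: (ltn_ord i); clear; lia.
by rewrite exprM om3 expr1n mul1r.
Qed.

Definition thetan (k : nat) : {poly C} :=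
  (3/7 * w ^+ k) *: 'X^7 + (w ^- k * t5) *: 'X^5
  + (w ^- k * t2) *: 'X^2 + (w ^+ k * x) *: 'X.
Lemma thetaE (i : 'I_3) : theta t5 t2 x i = thetan i.
Proof. by []. Qed.

Lemma coef_thetan k n : (thetan k)`_n =
  (3/7 * w ^+ k) * (n == 7)%:R + (w ^- k * t5) * (n == 5)%:R
  + (w ^- k * t2) * (n == 2)%:R + (w ^+ k * x) * (n == 1)%:R.
Proof. by rewrite /thetan !coefD !coefZ !coefXn coefX. Qed.

Lemma wpick n c a : w ^+ n * (a * (n == c)%:R) = w ^+ c * a * (n == c)%:R.
Proof. by case: eqP => [->|_]; rewrite ?mulr0 // mulr1 mulr1. Qed.

Lemma thetan_rot n :
  [/\ w ^+ n * (thetan 2)`_n = (thetan 0)`_n,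
      w ^+ n * (thetan 0)`_n = (thetan 1)`_n &
      w ^+ n * (thetan 1)`_n = (thetan 2)`_n].
Proof.
rewrite !coef_thetan !mulrDr !wpick ?winv0 ?winv1 ?winv2.
have h := om3.
move: h winv1 winv2; generalize (omega C) => w' h i1 i2.
by split; rewrite ?expr0 ?invr1 ?i1 ?i2; ring: h.
Qed.

Definition tcn m k := ((thetan k)^`())`_m.
Lemma mcoef_dTheta m :
  mcoef (dTheta t5 t2 x) m = diag_mx (\row_(i < 3) tcn m i).
Proof.
apply/matrixP => i j; rewrite /dTheta /Theta !mxE.
by case: (i == j); rewrite ?mulr1n ?mulr0n ?deriv0 ?coef0.
Qed.

Lemma tcn_coef m k : tcn m k = (thetan k)`_m.+1 *+ m.+1.
Proof. by rewrite /tcn coef_deriv. Qed.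

Lemma T_sym m : w ^+ m.+1 *: sigm (mcoef (dTheta t5 t2 x) m) = mcoef (dTheta t5 t2 x) m.
Proof.
rewrite mcoef_dTheta /sigm /Smx /mx3.
have [e1 e2 e3] := thetan_rot m.+1.
move: e1 e2 e3; set a0 := (thetan 0)`_m.+1; set a1 := (thetan 1)`_m.+1;
  set a2 := (thetan 2)`_m.+1 => e1 e2 e3.
apply/matrixP; case=> [[|[|[|?]]] ?] //; case=> [[|[|[|?]]] ?] //;
  rewrite ?mxE ?big_ord_recr ?big_ord0 /= ?mxE /= ?big_ord_recr ?big_ord0 /= ?mxE /=.
all: rewrite ?mulr1n ?mulr0n ?mul0r ?mulr0 ?mul1r ?mulr1 ?add0r ?addr0 //.
all: rewrite ?mulr0 //.
all: by rewrite !tcn_coef -/a0 -/a1 -/a2 mulrnAr ?e1 ?e2 ?e3.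
Qed.

End S.


Section Series.
Variable C : numClosedFieldType.
Local Notation M := 'M[C]_3.
Implicit Types a b c : nat -> M.

Definition conv a b : nat -> M := fun n => \sum_(i < n.+1) a i *m b (n - i)%N.

Lemma conv_rev a b n : conv a b n = \sum_(i < n.+1) a (n - i)%N *m b i.
Proof.
rewrite /conv (reindex_inj rev_ord_inj) /=; apply: eq_bigr => i _.
by rewrite subSS subKn // -ltnS.
Qed.

Lemma convA a b c : conv (conv a b) c = conv a (conv b c).
Proof.
apply: functional_extensionality => i; symmetry.
rewrite [RHS]conv_rev {1}/conv.
pose coef3 j k := a j *m (b (i - j - k)%N *m c k).
transitivity (\sum_(j < i.+1) \sum_(k < i.+1 | (k <= i - j)%N) coef3 j k).
  apply: eq_bigr => /= j _; rewrite conv_rev mulmx_sumr.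
  by rewrite (big_ord_narrow_leq (leq_subr _ _)).
rewrite (exchange_big_dep predT) //=; apply: eq_bigr => k _.
transitivity (\sum_(j < i.+1 | (j <= i - k)%N) coef3 j k).
  apply: eq_bigl => j; rewrite -ltnS -(ltnS j) -!subSn ?leq_ord //.
  by rewrite -subn_gt0 -(subn_gt0 j) -!subnDA addnC.
rewrite (big_ord_narrow_leq (leq_subr _ _)) /conv mulmx_suml.
by apply: eq_bigr => j _; rewrite /coef3 -!subnDA addnC mulmxA.
Qed.

Lemma smx0 : (0 : C)%:M = 0 :> M.
Proof. by apply/matrixP=> i j; rewrite !mxE mul0rn. Qed.

Definition sadd a b : nat -> M := fun n => a n + b n.
Definition sopp a : nat -> M := fun n => - a n.
Definition szero : nat -> M := fun _ => 0.
Definition delta : nat -> M := fun n => ((n == 0%N)%:R : C)%:M.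

Lemma conv_addl a b c : conv (sadd a b) c = sadd (conv a c) (conv b c).
Proof.
apply: functional_extensionality => n; rewrite /conv /sadd -big_split /=.
by apply: eq_bigr => i _; rewrite mulmxDl.
Qed.
Lemma conv_addr a b c : conv a (sadd b c) = sadd (conv a b) (conv a c).
Proof.
apply: functional_extensionality => n; rewrite /conv /sadd -big_split /=.
by apply: eq_bigr => i _; rewrite mulmxDr.
Qed.
Lemma conv_oppl a b : conv (sopp a) b = sopp (conv a b).
Proof.
apply: functional_extensionality => n; rewrite /conv /sopp -sumrN.
by apply: eq_bigr => i _; rewrite mulNmx.
Qed.
Lemma conv_oppr a b : conv a (sopp b) = sopp (conv a b).
Proof.
apply: functional_extensionality => n; rewrite /conv /sopp -sumrN.
by apply: eq_bigr => i _; rewrite mulmxN.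
Qed.
Lemma conv0l a : conv szero a = szero.
Proof.
apply: functional_extensionality => n; rewrite /conv /szero big1 // => i _.
by rewrite mul0mx.
Qed.
Lemma conv0r a : conv a szero = szero.
Proof.
apply: functional_extensionality => n; rewrite /conv /szero big1 // => i _.
by rewrite mulmx0.
Qed.
Lemma conv_deltal a : conv delta a = a.
Proof.
apply: functional_extensionality => n; rewrite /conv big_ord_recl /= mul1mx subn0.
rewrite big1 ?addr0 // => i _; by rewrite /delta /= smx0 ?mul0mx // mul0mx.
Qed.
Lemma conv_deltar a : conv a delta = a.
Proof.
apply: functional_extensionality => n; rewrite conv_rev big_ord_recl /= mulmx1 subn0.
rewrite big1 ?addr0 // => i _; by rewrite /delta /= ?smx0 mulmx0.
Qed.
Lemma conv_scalar_comm (s : nat -> C) a :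
  conv (fun n => (s n)%:M) a = conv a (fun n => (s n)%:M).
Proof.
apply: functional_extensionality => n; rewrite [RHS]conv_rev /conv.
by apply: eq_bigr => i _; rewrite scalar_mxC.
Qed.

Definition Nop a : nat -> M := fun n => (- (n%:R : C)) *: a n.
Lemma Nop_conv a b : Nop (conv a b) = sadd (conv (Nop a) b) (conv a (Nop b)).
Proof.
apply: functional_extensionality => n; rewrite /Nop /conv /sadd -big_split /=.
rewrite scaler_sumr; apply: eq_bigr => i _.
rewrite -scalemxAl -scalemxAr -scalerDl -opprD -natrD subnKC //.
by rewrite -ltnS.
Qed.
Lemma Nop_add a b : Nop (sadd a b) = sadd (Nop a) (Nop b).
Proof. by apply: functional_extensionality => n; rewrite /Nop /sadd scalerDr. Qed.
Lemma Nop_opp a : Nop (sopp a) = sopp (Nop a).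
Proof. by apply: functional_extensionality => n; rewrite /Nop /sopp scalerN. Qed.
Lemma Nop_delta : Nop delta = szero.
Proof.
apply: functional_extensionality => -[|n]; rewrite /Nop /delta /szero.
  by rewrite oppr0 scale0r.
by rewrite /= smx0 scaler0.
Qed.

Variable K : nat.
Definition sh : nat -> M := fun n => ((n == K.+1)%:R : C)%:M.
Definition dK a : nat -> M := conv sh (Nop a).

Lemma dKE a n : dK a n =
  if (K < n)%N then (- ((n - K.+1)%:R : C)) *: a (n - K.+1)%N else 0.
Proof.
rewrite /dK /conv /sh /Nop.
case: ltnP => hK.
  have h : (K.+1 < n.+1)%N by [].
  rewrite (bigD1 (Ordinal h)) //= eqxx mul1mx big1 ?addr0 // => i.
  move=> /negbTE ne; have -> : (nat_of_ord i == K.+1) = false.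
    by apply/negbTE; apply: contraFN ne => /eqP e; apply/eqP/val_inj.
  by rewrite smx0 mul0mx.
rewrite big1 // => i _; have -> : (nat_of_ord i == K.+1) = false.
  apply/negbTE; rewrite neq_ltn; apply/orP; left.
  by apply: (leq_trans (ltn_ord i)); rewrite ltnS.
by rewrite smx0 mul0mx.
Qed.

Lemma shC c : conv sh c = conv c sh.
Proof. exact: (conv_scalar_comm (fun n => (n == K.+1)%:R)). Qed.
Lemma dK_conv a b : dK (conv a b) = sadd (conv (dK a) b) (conv a (dK b)).
Proof.
rewrite /dK Nop_conv conv_addr -convA; congr sadd.
by rewrite -convA shC convA.
Qed.
Lemma dK_add a b : dK (sadd a b) = sadd (dK a) (dK b).
Proof. by rewrite /dK Nop_add conv_addr. Qed.
Lemma dK_opp a : dK (sopp a) = sopp (dK a).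
Proof. by rewrite /dK Nop_opp conv_oppr. Qed.
Lemma dK_delta : dK delta = szero.
Proof. by rewrite /dK Nop_delta conv0r. Qed.

Lemma cancel_l A X : A 0%N = 1%:M -> (forall n, conv A X n = 0) -> forall n, X n = 0.
Proof.
move=> A0 h n; elim/ltn_ind: n => n IH.
have := h n; rewrite /conv big_ord_recl /= A0 mul1mx subn0 big1 ?addr0 // => i _.
rewrite IH ?mulmx0 //; case: n {IH h} i => [|n] i; first by case: i.
by rewrite subSS ltnS leq_subr.
Qed.

Lemma cancel_r A X : A 0%N = 1%:M -> (forall n, conv X A n = 0) -> forall n, X n = 0.
Proof.
move=> A0 h n; elim/ltn_ind: n => n IH.
have := h n; rewrite /conv big_ord_recr /= subnn A0 mulmx1 big1 ?add0r // => i _.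
by rewrite IH ?mul0mx.
Qed.

Fixpoint psis (Y : nat -> M) (n : nat) : seq M :=
  match n with
  | 0 => [:: 1%:M]
  | n'.+1 => rcons (psis Y n')
      (- \sum_(i < n'.+1) nth 0 (psis Y n') i *m Y (n'.+1 - i)%N)
  end.
Definition Psi Y n := nth 0 (psis Y n) n.

Lemma size_psis Y n : size (psis Y n) = n.+1.
Proof. by elim: n => [|n IH] //=; rewrite size_rcons IH. Qed.

Lemma nth_psis Y n i : (i <= n)%N -> nth 0 (psis Y n) i = Psi Y i.
Proof.
elim: n => [|n IH] hi; first by case: i hi.
rewrite leq_eqVlt in hi; case/orP: hi => [/eqP -> //|hi].
by rewrite /= nth_rcons size_psis hi IH.
Qed.

Lemma Psi0 Y : Psi Y 0 = 1%:M.
Proof. by []. Qed.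

Lemma PsiS Y n : Psi Y n.+1 = - \sum_(i < n.+1) Psi Y i *m Y (n.+1 - i)%N.
Proof.
rewrite /Psi /= nth_rcons size_psis ltnn eqxx; congr (- _).
by apply: eq_bigr => i _; rewrite nth_psis // -ltnS.
Qed.

Lemma conv_Psi Y : Y 0%N = 1%:M -> conv (Psi Y) Y = delta.
Proof.
move=> Y0; apply: functional_extensionality => -[|n].
  by rewrite /conv big_ord1 /= Y0 mulmx1 Psi0 /delta.
rewrite /conv big_ord_recr /= subnn Y0 mulmx1 PsiS subrr /delta /=.
by rewrite smx0.
Qed.

Lemma diag0 : diag_mx (0 : 'rV[C]_3) = 0.
Proof. by apply/matrixP => i j; rewrite !mxE mul0rn. Qed.

Variables (J : nat) (tr : nat -> 'rV[C]_3) (Lc : nat -> M).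
Hypotheses (hJK : (J <= K)%N) (htr0 : forall q, (q < J)%N -> tr q = 0)
  (hdist : forall i j : 'I_3, i != j -> tr J 0 i != tr J 0 j).
Definition Tc : nat -> M := fun q => diag_mx (tr q).
Definition Sol Y := forall n, dK Y n + conv Y Tc n = conv Lc Y n.

Lemma key W : W 0%N = 0 -> dK W = sadd (conv Tc W) (sopp (conv W Tc)) ->
  forall n, W n = 0.
Proof.
move=> W0 hW k; elim/ltn_ind: k => k IH.
case: k IH => [|k] IH; first exact: W0.
apply/matrixP => i j; rewrite [RHS]mxE.
case: (eqVneq i j) => [<-|nij].
- have := congr1 (fun f => f (k.+1 + K.+1)%N) hW.
  rewrite /sadd /sopp dKE ifT; last by rewrite addnS ltnS leq_addl.
  rewrite addnK => /(congr1 (fun A : M => A i i)); rewrite !mxE.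
  have -> : conv Tc W (k.+1 + K.+1)%N i i = conv W Tc (k.+1 + K.+1)%N i i.
    rewrite [in RHS]conv_rev /conv !summxE; apply: eq_bigr => a _.
    by rewrite /Tc mul_diag_mx mul_mx_diag !mxE mulrC.
  rewrite subrr => /eqP; rewrite mulf_eq0 oppr_eq0 pnatr_eq0 /=.
  by move/eqP.
- have := congr1 (fun f => f (k.+1 + J)%N) hW.
  rewrite /sadd /sopp dKE.
  have -> : (if (K < k.+1 + J)%N then
     (- ((k.+1 + J - K.+1)%N%:R : C)) *: W (k.+1 + J - K.+1)%N else 0) = 0.
    case: ifP => // hK; rewrite IH ?scaler0 //.
    lia.
  have hJn : (J < (k.+1 + J).+1)%N by rewrite ltnS leq_addl.
  have hkn : (k.+1 < (k.+1 + J).+1)%N by rewrite ltnS leq_addr.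
  have -> : conv Tc W (k.+1 + J)%N = Tc J *m W k.+1.
    rewrite /conv (bigD1 (Ordinal hJn)) //= addnK big1 ?addr0 // => a ha.
    have haJ : nat_of_ord a != J by apply: contraNneq ha => e; apply/eqP/val_inj.
    case: (ltngtP a J) haJ => // h _.
      by rewrite /Tc htr0 // diag0 mul0mx.
    by rewrite IH ?mulmx0 //; have := ltn_ord a; lia.
  have -> : conv W Tc (k.+1 + J)%N = W k.+1 *m Tc J.
    rewrite /conv (bigD1 (Ordinal hkn)) //= addKn big1 ?addr0 // => a ha.
    have hak : nat_of_ord a != k.+1 by apply: contraNneq ha => e; apply/eqP/val_inj.
    case: (ltngtP a k.+1) hak => // h _.
      by rewrite IH ?mul0mx.
    by rewrite /Tc htr0 ?diag0 ?mulmx0 //; have := ltn_ord a; lia.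
  move/(congr1 (fun A : M => A i j)); rewrite /Tc mul_diag_mx mul_mx_diag !mxE.
  move/eqP; rewrite eq_sym subr_eq0 eq_sym [W k.+1 i j * _]mulrC => /eqP e.
  have : (tr J 0 i - tr J 0 j) * W k.+1 i j == 0 by rewrite mulrBl e subrr.
  by rewrite mulf_eq0 subr_eq0 (negbTE (hdist i j nij)) /= => /eqP.
Qed.

Lemma sol_unique Y1 Y2 : Sol Y1 -> Sol Y2 -> Y1 0%N = 1%:M -> Y2 0%N = 1%:M ->
  forall n, Y2 n = Y1 n.
Proof.
move=> s1 s2 h1 h2.
set P := Psi Y1.
have hP : conv P Y1 = delta := conv_Psi Y1 h1.
have dsol Y : Sol Y -> dK Y = sadd (conv Lc Y) (sopp (conv Y Tc)).
  move=> sY; apply: functional_extensionality => n.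
  by rewrite /sadd /sopp -(sY n) addrK.
have d1 := dsol _ s1; have d2 := dsol _ s2.
have e1 : conv (dK P) Y1 = sopp (conv P (dK Y1)).
  apply: functional_extensionality => n.
  have := congr1 (fun f => f n) (dK_conv P Y1).
  rewrite hP dK_delta /szero /sadd /sopp => /eqP; rewrite eq_sym addr_eq0.
  by move/eqP.
have e2 : conv P (dK Y1) = sadd (conv (conv P Lc) Y1) (sopp Tc).
  by rewrite d1 conv_addr conv_oppr -!convA hP conv_deltal.
have e3 : conv (conv Tc P) Y1 = Tc by rewrite convA hP conv_deltar.
have dP : dK P = sadd (conv Tc P) (sopp (conv P Lc)).
  apply: functional_extensionality => n; apply/eqP; rewrite -subr_eq0; apply/eqP.
  pose E := sadd (dK P) (sopp (sadd (conv Tc P) (sopp (conv P Lc)))).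
  have hE : forall m, conv E Y1 m = 0.
    move=> m; rewrite /E conv_addl conv_oppl conv_addl conv_oppl e1 e2 e3 /sadd /sopp.
    by rewrite !opprD !opprK addrC !addrA addrK addNr.
  exact: (cancel_r _ _ h1 hE n).
set D := sadd Y2 (sopp Y1).
have dD : dK D = sadd (conv Lc D) (sopp (conv D Tc)).
  rewrite /D dK_add dK_opp d1 d2 conv_addr conv_oppr conv_addl conv_oppl.
  apply: functional_extensionality => n; rewrite /sadd /sopp.
  by rewrite !opprD !opprK -!addrA; congr (_ + _); rewrite addrCA; congr (_ + _); rewrite addrC.
set W := conv P D.
have dW : dK W = sadd (conv Tc W) (sopp (conv W Tc)).
  rewrite /W dK_conv dP dD conv_addl conv_oppl conv_addr conv_oppr !convA.
  apply: functional_extensionality => n; rewrite /sadd /sopp.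
  by rewrite -addrA addKr.
have W0 : W 0%N = 0.
  by rewrite /W /conv big_ord1 /= /P Psi0 mul1mx /D /sadd /sopp h1 h2 subrr.
have hW := key _ W0 dW.
move=> n; apply/eqP; rewrite -subr_eq0; apply/eqP.
exact: (cancel_l _ _ (Psi0 Y1) hW n).
Qed.

End Series.


Section Conv.
Variable C : numClosedFieldType.
Local Notation M := 'M[C]_3.

Lemma cz (Y : nat -> M) (a b : nat) :
  Defs.coefZ Y (a%:Z - b%:Z) = if (b <= a)%N then Y (a - b)%N else 0.
Proof.
case: leqP => h; first by rewrite subzn.
have -> : a%:Z - b%:Z = Negz (b - a).-1 by lia.
by [].
Qed.

Lemma widen0 (g : nat -> M) N B : (N <= B)%N -> (forall m, (N <= m)%N -> g m = 0) ->
  \sum_(m < N) g m = \sum_(m < B) g m.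
Proof.
move=> hNB hg; rewrite (big_ord_widen B g hNB) big_mkcond; apply: eq_bigr => i _.
by case: ifP => // /negbT; rewrite -leqNgt => h; rewrite hg.
Qed.

Lemma sum_ord_eq B t (f : nat -> M) :
  \sum_(i < B | nat_of_ord i == t) f i = if (t < B)%N then f t else 0.
Proof.
case: (boolP (t < B)%N) => h.
  rewrite (big_pred1 (Ordinal h)) // => i /=.
rewrite big_pred0 // => i; apply/negbTE; rewrite neq_ltn.
by rewrite (leq_trans (ltn_ord i)) // leqNgt.
Qed.

Lemma reidx (op : M -> M -> M) (Y F : nat -> M) (N K n : nat) :
  (forall f, op 0 f = 0) -> (forall y, op y 0 = 0) -> (N <= K.+1)%N ->
  (forall m, (N <= m)%N -> F m = 0) ->
  \sum_(m < N) op (Defs.coefZ Y (m%:Z - (K%:Z - n%:Z))) (F m)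
  = \sum_(i < n.+1) op (Y i) (if (n - i <= K)%N then F (K - (n - i))%N else 0).
Proof.
move=> o0l o0r hN hF.
rewrite (widen0 (fun m : nat => op (Defs.coefZ Y (m%:Z - (K%:Z - n%:Z))) (F m)) _ _ hN); last by move=> m hm; rewrite hF ?o0r.
transitivity (\sum_(m < K.+1) \sum_(i < n.+1 | (i + K == m + n)%N) op (Y i) (F m)).
  apply: eq_bigr => m _.
  have -> : (m%:Z - (K%:Z - n%:Z)) = ((m + n)%N%:Z - K%:Z) by lia.
  rewrite cz; case: (leqP K (m + n)) => h.
    rewrite (eq_bigl (fun i : 'I_n.+1 => nat_of_ord i == (m + n - K)%N)); last first.
      by move=> i /=; apply/eqP/eqP; move: (ltn_ord m) h; clear; lia.
    rewrite (sum_ord_eq _ _ (fun i => op (Y i) (F m))) ifT //; move: (ltn_ord m) h; clear; lia.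
  rewrite o0l big_pred0 // => i; apply/eqP; move: h; clear; lia.
rewrite (exchange_big_dep predT) //=; apply: eq_bigr => i _.
case: (leqP n (i + K)) => h.
  rewrite ifT; last by move: h; clear; lia.
  rewrite (eq_bigl (fun m : 'I_K.+1 => nat_of_ord m == (i + K - n)%N)); last first.
    by move=> m /=; apply/eqP/eqP; move: (ltn_ord i) h; clear; lia.
  rewrite (sum_ord_eq _ _ (fun m => op (Y i) (F m))) ifT; last by move: (ltn_ord i) h; clear; lia.
  by congr (op _ (F _)); move: (ltn_ord i) h; clear; lia.
rewrite ifF; last by move: h; clear; lia.
rewrite o0r big_pred0 // => m; apply/eqP; move: h (ltn_ord m); clear; lia.
Qed.
End Conv.

Arguments omega : simpl never.
Arguments GRing.exp : simpl never.

Section Main.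
Variable C : numClosedFieldType.
Variables (t5 t2 x QU QV QW PU PV PW : C).
Local Notation M := 'M[C]_3.
Local Notation w := (omega C).
Local Notation dTh := (dTheta t5 t2 x).
Local Notation LP := (Lpol t5 t2 x QU QV QW PU PV PW).

Definition KK := (msize dTh + msize LP + 6)%N.
Definition trr q : 'rV[C]_3 :=
  \row_(i < 3) (if (q <= KK)%N then tcn C t5 t2 x (KK - q) i else 0).
Definition Lcc q : M :=
  if (q <= KK)%N then mcoef LP (KK - q) else if q == KK.+1 then Lres C else 0.

Lemma mcoef_big (A : 'M[{poly C}]_3) m : (msize A <= m)%N -> mcoef A m = 0.
Proof.
move=> h; apply/matrixP => i j; rewrite !mxE nth_default //.
apply: leq_trans h; rewrite /msize.
have h1 := @leq_bigmax _ (fun j => size (A i j)) j.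
have h2 := @leq_bigmax _ (fun i => \max_(j < 3) size (A i j)) i.
exact: leq_trans h1 h2.
Qed.

Lemma Tc_eq q : Tc C trr q = if (q <= KK)%N then mcoef dTh (KK - q) else 0.
Proof.
rewrite /Tc /trr.
case: (boolP (q <= KK)%N) => hq.
  by rewrite mcoef_dTheta; congr diag_mx; apply/rowP => i; rewrite !mxE hq.
by apply/matrixP => i j; rewrite !mxE ?mul0rn.
Qed.

Lemma reidxR (Y F : nat -> M) (N K n : nat) : (N <= K.+1)%N ->
  (forall m, (N <= m)%N -> F m = 0) ->
  \sum_(m < N) (Defs.coefZ Y (m%:Z - (K%:Z - n%:Z)) *m F m)
  = \sum_(i < n.+1) (Y i *m (if (n - i <= K)%N then F (K - (n - i))%N else 0)).
Proof.
move=> hN hF; apply: (reidx C (fun y f => y *m f)) => // [f|y].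
  by rewrite mul0mx. by rewrite mulmx0.
Qed.
Lemma reidxL (Y F : nat -> M) (N K n : nat) : (N <= K.+1)%N ->
  (forall m, (N <= m)%N -> F m = 0) ->
  \sum_(m < N) (F m *m Defs.coefZ Y (m%:Z - (K%:Z - n%:Z)))
  = \sum_(i < n.+1) ((if (n - i <= K)%N then F (K - (n - i))%N else 0) *m Y i).
Proof.
move=> hN hF; apply: (reidx C (fun y f => f *m y)) => // [f|y].
  by rewrite mulmx0. by rewrite mul0mx.
Qed.

Lemma formal_Sol Y : formal_solution t5 t2 x QU QV QW PU PV PW Y -> Sol C KK trr Lcc Y.
Proof.
move=> [_ h] n; have := h (KK%:Z - n%:Z).
rewrite reidxR; last 2 first.
- by rewrite /KK; lia.
- by move=> m hm; apply: mcoef_big.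
rewrite reidxL; last 2 first.
- by rewrite /KK; lia.
- by move=> m hm; apply: mcoef_big.
have -> : - (KK%:Z - n%:Z) - 1 = n%:Z - (KK.+1)%:Z by lia.
have -> : - 1 - (KK%:Z - n%:Z) = n%:Z - (KK.+1)%:Z by lia.
rewrite !cz => hn.
have -> : dK C KK Y n = (KK%:Z - n%:Z + 1)%:~R *:
    (if (KK.+1 <= n)%N then Y (n - KK.+1)%N else 0).
  rewrite dKE; case: ifP => hK; last by rewrite scaler0.
  have -> : KK%:Z - n%:Z + 1 = - ((n - KK.+1)%N%:Z) by lia.
  by rewrite intrN -pmulrn.
have -> : conv C Y (Tc C trr) n =
    \sum_(i < n.+1) (Y i *m (if (n - i <= KK)%N then mcoef dTh (KK - (n - i))%N else 0)).
  by rewrite /conv; apply: eq_bigr => i _; rewrite Tc_eq.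
rewrite hn conv_rev.
rewrite [RHS](eq_bigr (fun i : 'I_n.+1 =>
   ((if (n - i <= KK)%N then mcoef LP (KK - (n - i))%N else 0) *m Y i)
   + (if (n - i == KK.+1)%N then Lres C *m Y i else 0))); last first.
  move=> i _; rewrite /Lcc; case: (boolP (n - i <= KK)%N) => h1;
    case: (boolP (n - i == KK.+1)%N) => h2; rewrite ?mul0mx ?addr0 ?add0r //.
  by move: h1 h2; clear; lia.
rewrite big_split /=; congr (_ + _).
rewrite -big_mkcond /=.
rewrite (eq_bigl (fun i : 'I_n.+1 => (nat_of_ord i == n - KK.+1)%N && (KK.+1 <= n)%N)); last first.
  by move=> i /=; apply/eqP/andP; move: (ltn_ord i); clear; lia.
case: (boolP (KK.+1 <= n)%N) => hK.
  rewrite (eq_bigl (fun i : 'I_n.+1 => (nat_of_ord i == n - KK.+1)%N)); last first.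
    by move=> i; rewrite andbT.
  rewrite (sum_ord_eq C _ _ (fun i => Lres C *m Y i)) ifT //.
  by move: hK; clear; lia.
by rewrite big_pred0 ?mulmx0 // => i; rewrite andbF.
Qed.
Lemma sc_inj (a : C) (A B : M) : a != 0 -> a *: A = a *: B -> A = B.
Proof.
move=> ha /(congr1 (fun X => a^-1 *: X)); rewrite !scalerA mulVf //.
by rewrite !scale1r.
Qed.

Lemma sig0 : sigm C 0 = 0.
Proof. by rewrite /sigm mulmx0 mul0mx. Qed.
Lemma sigD A B : sigm C (A + B) = sigm C A + sigm C B.
Proof. by rewrite /sigm mulmxDr mulmxDl. Qed.
Lemma sig_sum n (F : 'I_n -> M) : sigm C (\sum_(i < n) F i) = \sum_(i < n) sigm C (F i).
Proof. by rewrite /sigm mulmx_sumr mulmx_suml. Qed.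

Local Notation c := (w ^+ KK.+1).

Lemma hT q : c *: sigm C (Tc C trr q) = w ^+ q *: Tc C trr q.
Proof.
rewrite Tc_eq; case: ifP => hq; last by rewrite sig0 !scaler0.
rewrite -[in RHS](T_sym C t5 t2 x (KK - q)) scalerA -exprD.
by have -> : (q + (KK - q).+1)%N = KK.+1 by move: hq; clear; lia.
Qed.

Lemma hL q : c *: sigm C (Lcc q) = w ^+ q *: Lcc q.
Proof.
rewrite /Lcc; case: ifP => hq.
  rewrite -[in RHS](Lpol_sym C t5 t2 x QU QV QW PU PV PW (KK - q)) scalerA -exprD.
  by have -> : (q + (KK - q).+1)%N = KK.+1 by move: hq; clear; lia.
case: eqP => [->|_]; last by rewrite sig0 !scaler0.
by rewrite Lres_sym.
Qed.

Lemma gen (a b cc : C) (P T : M) :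
  (a * b * cc) *: (P *m T) = cc *: ((a *: P) *m (b *: T)).
Proof. by rewrite -scalemxAl -scalemxAr !scalerA; congr (_ *: _); ring. Qed.
Lemma gen2 (a cc k : C) (X : M) :
  (a * cc * cc) *: (k *: X) = (cc * cc) *: (k *: (a *: X)).
Proof. by rewrite !scalerA; congr (_ *: _); ring. Qed.

Definition Phir (Phi : nat -> M) k := w ^- k *: sigm C (Phi k).
Lemma PhirE Phi i : w ^+ i *: Phir Phi i = sigm C (Phi i).
Proof. by rewrite /Phir scalerA mulfV ?scale1r // expf_neq0 // wnz. Qed.

Lemma Sol_rot Phi : Sol C KK trr Lcc Phi -> Sol C KK trr Lcc (Phir Phi).
Proof.
move=> s n.
have cn : w ^+ n * c != 0 by rewrite mulf_neq0 // expf_neq0 // wnz.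
apply: (sc_inj _ _ _ cn).
have cA : (w ^+ n * c) *: conv C (Phir Phi) (Tc C trr) n
        = (c * c) *: sigm C (conv C Phi (Tc C trr) n).
  rewrite /conv scaler_sumr sig_sum scaler_sumr; apply: eq_bigr => i _.
  have e : w ^+ n = w ^+ i * w ^+ (n - i) by rewrite -exprD subnKC // -ltnS.
  transitivity (c *: ((w ^+ i *: Phir Phi i) *m (w ^+ (n - i) *: Tc C trr (n - i)))).
    by rewrite e gen.
  by rewrite PhirE -hT -scalemxAr scalerA sigM.
have cB : (w ^+ n * c) *: conv C Lcc (Phir Phi) n
        = (c * c) *: sigm C (conv C Lcc Phi n).
  rewrite /conv scaler_sumr sig_sum scaler_sumr; apply: eq_bigr => i _.
  have e : w ^+ n = w ^+ i * w ^+ (n - i) by rewrite -exprD subnKC // -ltnS.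
  transitivity (c *: ((w ^+ i *: Lcc i) *m (w ^+ (n - i) *: Phir Phi (n - i)))).
    by rewrite e gen.
  by rewrite PhirE -hL -scalemxAl scalerA sigM.
have cD : (w ^+ n * c) *: dK C KK (Phir Phi) n = (c * c) *: sigm C (dK C KK Phi n).
  rewrite !dKE; case: ifP => hK; last by rewrite sig0 !scaler0.
  have e : w ^+ n = w ^+ (n - KK.+1) * c by rewrite -exprD subnK.
  by rewrite sigZ -PhirE e gen2.
rewrite scalerDr cD cA -scalerDr -sigD s.
by rewrite cB.
Qed.

Lemma Phir0 Phi : Phi 0%N = 1%:M -> Phir Phi 0 = 1%:M.
Proof. by move=> h; rewrite /Phir expr0 invr1 scale1r h /sigm mulmx1 STS. Qed.
Lemma tcn_big m k : (6 < m)%N -> tcn C t5 t2 x m k = 0.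
Proof.
move=> h; rewrite tcn_coef coef_thetan.
have -> : (m.+1 == 7)%N = false by apply/eqP; move: h; clear; lia.
have -> : (m.+1 == 5)%N = false by apply/eqP; move: h; clear; lia.
have -> : (m.+1 == 2)%N = false by apply/eqP; move: h; clear; lia.
have -> : (m.+1 == 1)%N = false by apply/eqP; move: h; clear; lia.
by rewrite !mulr0 !addr0 mul0rn.
Qed.

Lemma tcn6 k : tcn C t5 t2 x 6 k = 3 * w ^+ k.
Proof.
rewrite tcn_coef coef_thetan /= !mulr0 !addr0 mulr1 -mulr_natr.
have h7 : (7 : C) != 0 by rewrite pnatr_eq0.
by field.
Qed.

Lemma w2n1 : w ^+ 2 != 1.
Proof.
apply/eqP => h; have := om3 C; rewrite exprS h mulr1 => e.
by move: (wn1 C); rewrite e eqxx.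
Qed.
Lemma wnw2 : w != w ^+ 2.
Proof.
apply/eqP => h; have : w * 1 = w * w by rewrite mulr1 -expr2.
by move/(mulfI (wnz C)) => e; move: (wn1 C); rewrite -e eqxx.
Qed.

Lemma main_aux Phi : formal_solution t5 t2 x QU QV QW PU PV PW Phi ->
  (forall xi : C,
      (Smx C)^T *m mx_eval (Theta t5 t2 x) (omega C * xi) *m Smx C
      = mx_eval (Theta t5 t2 x) xi) /\
  (forall k : nat, Phi k = omega C ^- k *: ((Smx C)^T *m Phi k *m Smx C)).
Proof.
move=> fs; split; first by move=> xi; exact: part1.
have s1 := formal_Sol _ fs.

have h0 : Phi 0%N = 1%:M by case: fs.
have s2 := Sol_rot _ s1.
have hJK : (KK - 6 <= KK)%N by rewrite leq_subr.
have htr0 : forall q, (q < KK - 6)%N -> trr q = 0.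
  move=> q hq; apply/rowP => i; rewrite !mxE ifT; last by move: hq; clear; lia.
  by rewrite tcn_big //; move: hq; clear; lia.
have hdist : forall i j : 'I_3, i != j -> trr (KK - 6) 0 i != trr (KK - 6) 0 j.
  move=> i j nij; rewrite !mxE ifT ?leq_subr //.
  have -> : (KK - (KK - 6))%N = 6%N by rewrite /KK; lia.
  rewrite !tcn6.
  have h3 : (3 : C) != 0 by rewrite pnatr_eq0.
  rewrite (inj_eq (mulfI h3)).
  move: nij; case: i => [[|[|[|?]]] ?] //; case: j => [[|[|[|?]]] ?] // _.
  all: rewrite ?expr0 ?expr1.
  - by rewrite eq_sym wn1.
  - by rewrite eq_sym w2n1.
  - by rewrite wn1.
  - by rewrite wnw2.
  - by rewrite w2n1.
  - by rewrite eq_sym wnw2.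
move=> k.
have e := sol_unique C KK (KK - 6) trr Lcc hJK htr0 hdist Phi (Phir Phi) s1 s2 h0 (Phir0 _ h0) k.
by rewrite -{1}e /Phir /sigm.
Qed.
End Main.

Theorem mainTheorem8 (C : numClosedFieldType)
    (t5 t2 x QU QV QW PU PV PW : C) (Phi : nat -> 'M[C]_3) :
  formal_solution t5 t2 x QU QV QW PU PV PW Phi ->
  (forall xi : C,
      (Smx C)^T *m mx_eval (Theta t5 t2 x) (omega C * xi) *m Smx C
      = mx_eval (Theta t5 t2 x) xi) /\
  (forall k : nat, Phi k = omega C ^- k *: ((Smx C)^T *m Phi k *m Smx C)).
Proof. exact: main_aux. Qed.
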